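(* Let $0<A<B$ and $h(t)=t\left(\frac{15-10t+3t^2}{8}\right)^2$. For $x>0$ define $$\rho(x)=\frac{\min\{h(t):t\in[A/x,B/x]\}}{\max\{h(t):t\in[A/x,B/x]\}} .$$ Then $\rho$ attains its maximum over $x\in(0,\infty)$ at $$x=\frac{3}{10}(A+B)+\frac25\sqrt{\tfrac12(A^2+B^2)+\tfrac1{16}(B-A)^2}.$$
   Context: Interpretation: if a Gabor frame operator $S$ has spectrum $[A,B]$ and is rescaled to $S/x$, one step of the iteration $\gamma\mapsto\frac{15}{8}\gamma-\frac54S_\gamma\gamma+\frac38S_\gamma^2\gamma$ (with $S_\gamma$ the frame operator of $(\gamma,a,b)$) maps the spectrum via $h$, and $\rho(x)$ is the resulting ratio of smallest to largest frame bound. *)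

(* Defs.v *)
From HB Require Import structures.
From mathcomp Require Import all_boot all_order all_algebra.
From mathcomp Require Import all_classical all_reals.
Set Implicit Arguments. Unset Strict Implicit. Unset Printing Implicit Defensive.
Import Order.TTheory GRing.Theory Num.Theory.
Local Open Scope classical_set_scope.
Local Open Scope ring_scope.

Definition hfun {R : realType} (t : R) : R :=
  t * ((15 - 10 * t + 3 * t ^+ 2) / 8) ^+ 2.

(* min / max of h over [a, b]; h is continuous, so these are attained and
   coincide with the infimum / supremum of the image. *)
Definition hmin {R : realType} (a b : R) : R :=
  inf [set hfun t | t in [set t : R | a <= t <= b]].
Definition hmax {R : realType} (a b : R) : R :=
  sup [set hfun t | t in [set t : R | a <= t <= b]].

Definition rho {R : realType} (A B x : R) : R :=
  hmin (A / x) (B / x) / hmax (A / x) (B / x).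

Definition xopt {R : realType} (A B : R) : R :=
  3 / 10 * (A + B)
  + 2 / 5 * Num.sqrt (1 / 2 * (A ^+ 2 + B ^+ 2) + 1 / 16 * (B - A) ^+ 2).

(* Main.v *)
Require Import Defs.
From HB Require Import structures.
From mathcomp Require Import all_boot all_order all_algebra.
From mathcomp Require Import all_classical all_reals.
From mathcomp Require Import ring lra.
Import Order.TTheory GRing.Theory Num.Theory.
Local Open Scope ring_scope.

Lemma fmono (R : realType) (u v : R) : u <= v ->
  u^+3 * (9* u^+2 - 15* u + 40) <= v^+3 * (9* v^+2 - 15* v + 40).
Proof.
move=> uv.
set p := u + v. set q := u * v.
set K := 27* p^+2 - 30* p + 40 - 9* q - 9*(p^+2/4).
set M := 45/16* p^+2 - 15/2* p + 30.
have e : v^+3 * (9* v^+2 - 15* v + 40) - u^+3 * (9* u^+2 - 15* u + 40) =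
  (v - u) * ((p^+2/4 - q) * K + p^+2 * M) by rewrite /K /M /p /q; field.
rewrite -subr_ge0 e.
have h0 : 0 <= p^+2/4 - q by rewrite /p /q; nra.
have hK : 0 <= K by rewrite /K; nra.
have hM : 0 <= M by rewrite /M; nra.
apply: mulr_ge0; first by rewrite subr_ge0.
apply: addr_ge0; apply: mulr_ge0 => //; exact: sqr_ge0.
Qed.

Lemma hmono (R : realType) (s t : R) : s <= t -> hfun s <= hfun t.
Proof.
move=> st; rewrite /hfun.
have e : forall y : R, y * ((15 - 10 * y + 3 * y ^+ 2) / 8) ^+ 2 =
   1 + (y-1)^+3 * (9*(y-1)^+2 - 15*(y-1) + 40) / 64 by move=> y; field.
rewrite !e lerD2l ler_pM2r //; last by rewrite invr_gt0.
apply: fmono; by rewrite lerD2r.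
Qed.

Lemma hmax_eq (R : realType) (a b : R) : a <= b -> hmax a b = hfun b.
Proof.
move=> ab; rewrite /hmax.
set E := (X in _ X = _).
have Eb : E (hfun b) by exists b => //=; rewrite ab lexx.
have ubE : ubound E (hfun b).
  by move=> y [t /= /andP[_ tb] <-]; exact: hmono.
apply/le_anti/andP; split.
  by apply: ge_sup => //; exists (hfun b).
by apply: (ub_le_sup _ Eb); exists (hfun b).
Qed.

Lemma hmin_eq (R : realType) (a b : R) : a <= b -> hmin a b = hfun a.
Proof.
move=> ab; rewrite /hmin.
set E := (X in _ X = _).
have Ea : E (hfun a) by exists a => //=; rewrite ab lexx.
have lbE : lbound E (hfun a).
  by move=> y [t /= /andP[ta _] <-]; exact: hmono.
apply/le_anti/andP; split.
  by apply: (ge_inf _ Ea); exists (hfun a).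
by apply: lb_le_inf => //; exists (hfun a).
Qed.

Definition PP {R : realType} (c x : R) := 15 * x ^+ 2 - 10 * c * x + 3 * c ^+ 2.

Lemma PP_gt0 {R : realType} (c x : R) : 0 < c -> 0 < PP c x.
Proof.
move=> c0; rewrite /PP.
have -> : 15 * x ^+ 2 - 10 * c * x + 3 * c ^+ 2 = 15 * (x - c / 3) ^+ 2 + 4 / 3 * c ^+ 2 by field.
apply: ltr_wpDl; first by apply: mulr_ge0 => //; exact: sqr_ge0.
apply: mulr_gt0 => //; nra.
Qed.

Lemma hfun_div (R : realType) (c x : R) : x != 0 ->
  hfun (c / x) = c * PP c x ^+ 2 / (64 * x ^+ 5).
Proof. move=> x0; rewrite /hfun /PP; field; exact: x0. Qed.

Lemma rhoE (R : realType) (A B x : R) : 0 < A -> A < B -> 0 < x ->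
  rho A B x = A / B * (PP A x / PP B x) ^+ 2.
Proof.
move=> A0 AB x0.
have B0 : 0 < B by exact: lt_trans AB.
have le : A / x <= B / x by rewrite ler_pM2r ?invr_gt0 //; exact: ltW.
rewrite /rho hmin_eq // hmax_eq // !hfun_div ?gt_eqF //.
have := PP_gt0 B x B0; have := PP_gt0 A x A0 => hA hB.
field; rewrite ?gt_eqF //; rewrite ?mulf_neq0 ?expf_neq0 ?gt_eqF //.
Qed.

Theorem mainTheorem11 (R : realType) (A B : R) :
  0 < A -> A < B ->
  0 < xopt A B /\ (forall x : R, 0 < x -> rho A B x <= rho A B (xopt A B)).
Proof.
move=> A0 AB.
have B0 : 0 < B by exact: lt_trans AB.
set S := 1 / 2 * (A ^+ 2 + B ^+ 2) + 1 / 16 * (B - A) ^+ 2.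
have S0 : 0 <= S by rewrite /S; nra.
set s := Num.sqrt S.
have s0 : 0 <= s := sqrtr_ge0 S.
have ss : s ^+ 2 = S by rewrite /s sqr_sqrtr.
set x0 := xopt A B.
have x0E : x0 = 3 / 10 * (A + B) + 2 / 5 * s by [].
clearbody x0.
have x0pos : 0 < x0 by rewrite x0E; nra.
split => // x xpos.
have E0 : 5 * x0 ^+ 2 - 3 * (A + B) * x0 + A * B = 0.
  have -> : 5 * x0 ^+ 2 - 3 * (A + B) * x0 + A * B = 4 / 5 * (s ^+ 2 - S).
    by rewrite x0E /S; field.
  by rewrite ss subrr mulr0.
have D : PP A x0 * PP B x - PP B x0 * PP A x
    = 15 * (PP A x0 - PP B x0) * (x - x0) ^+ 2.
  apply/eqP; rewrite -subr_eq0; apply/eqP.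
  have -> : PP A x0 * PP B x - PP B x0 * PP A x
    - 15 * (PP A x0 - PP B x0) * (x - x0) ^+ 2
    = 30 * (B - A) * (5 * x0 ^+ 2 - 3 * (A + B) * x0 + A * B) * (x - x0)
    by rewrite /PP; ring.
  by rewrite E0 mulr0 mul0r.
have lead : 0 <= PP A x0 - PP B x0.
  have -> : PP A x0 - PP B x0 = (B - A) * 4 * s by rewrite /PP x0E; field.
  apply: mulr_ge0 => //; apply: mulr_ge0 => //; rewrite subr_ge0; exact: ltW.
have hA := PP_gt0 A x A0; have hB := PP_gt0 B x B0.
have hA0 := PP_gt0 A x0 A0; have hB0 := PP_gt0 B x0 B0.
rewrite !rhoE //.
rewrite ler_pM2l ?divr_gt0 //.
have r : PP A x / PP B x <= PP A x0 / PP B x0.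
  rewrite ler_pdivlMr // mulrAC ler_pdivrMr //.
  rewrite -subr_ge0.
  have -> : PP A x0 * PP B x - PP A x * PP B x0
    = PP A x0 * PP B x - PP B x0 * PP A x by ring.
  rewrite D; apply: mulr_ge0; [apply: mulr_ge0 => // | exact: sqr_ge0].
have r0 : 0 <= PP A x / PP B x by apply: divr_ge0; exact: ltW.
nra.
Qed.
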